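(* Let $\mathcal M\subset{}^d\mathcal K$ be maximal isotropic. For any $\mathsf k>0$ the number of eigenvalues of $\mathfrak S(\mathsf k;\mathcal M)$ lying in the open upper (respectively lower) complex half-plane equals $n_+(\mathcal M)$ (respectively $n_-(\mathcal M)$). The number of real eigenvalues of $\mathfrak S(\mathsf k;\mathcal M)$ equals $n_0(\mathcal M)$.
   Context: $\mathcal K$ is a finite-dimensional Hilbert space, $\mathcal K\cong\mathbb C^{n}$ with $n=|\mathcal E|+2|\mathcal I|$, and ${}^d\mathcal K=\mathcal K\oplus\mathcal K$ carries the symplectic form $\omega(\chi,\chi')=\langle\chi,J\chi'\rangle$, $J=\begin{pmatrix}0&\mathbb I\\-\mathbb I&0\end{pmatrix}$. A subspace is maximal isotropic if $\omega$ vanishes on it and it is maximal with this property; these are exactly $\mathcal M(A,B)=\{\chi_1\oplus\chi_2:A\chi_1+B\chi_2=0\}$ with $A,B:\mathcal K\to\mathcal K$ linear, $(A,B):{}^d\mathcal K\to\mathcal K$ of rank $n$ and $AB^\dagger$ self-adjoint. For real $\mathsf k\neq0$, $A+i\mathsf kB$ is invertible and $\mathfrak S(\mathsf k;\mathcal M)=-(A+i\mathsf kB)^{-1}(A-i\mathsf kB)$ is unitary and depends only on $\mathcal M=\mathcal M(A,B)$. $n_+(\mathcal M),n_-(\mathcal M),n_0(\mathcal M)$ denote the numbers of positive, negative, zero eigenvalues (with multiplicity) of $AB^\dagger$, independent of the choice of $(A,B)$. *)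

(* Defs.v *)
From HB Require Import structures.
From mathcomp Require Import all_boot all_order all_algebra all_field.
Set Implicit Arguments. Unset Strict Implicit. Unset Printing Implicit Defensive.
Import Order.TTheory GRing.Theory Num.Theory.
Local Open Scope ring_scope.

Definition adjmx (C : numClosedFieldType) m n (A : 'M[C]_(m, n)) : 'M[C]_(n, m) := (map_mx Num.conj A)^T.

(* the eigenvalues of a square complex matrix, listed with algebraic
   multiplicity: a sequence rs with char_poly M = \prod_(z <- rs) ('X - z) *)
Definition eigseq (C : numClosedFieldType) n (M : 'M[C]_n) : seq C :=
  sval (closed_field_poly_normal (char_poly M)).

Definition eigcount (C : numClosedFieldType) n (M : 'M[C]_n) (P : pred C) : nat := count P (eigseq M).

Definition Smat (C : numClosedFieldType) n (A B : 'M[C]_n) (k : C) : 'M[C]_n :=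
  - (invmx (A + ('i * k) *: B) *m (A - ('i * k) *: B)).

(* (A,B) defines a maximal isotropic subspace M(A,B):
   rank of the n x 2n matrix (A B) is n, and A B^dagger is self-adjoint *)
Definition max_isotropic_data (C : numClosedFieldType) n (A B : 'M[C]_n) : Prop :=
  \rank (row_mx A B) = n /\ adjmx (A *m adjmx B) = A *m adjmx B.

Definition n_plus (C : numClosedFieldType) n (A B : 'M[C]_n) : nat := eigcount (A *m adjmx B) (fun z => 0 < z).
Definition n_minus (C : numClosedFieldType) n (A B : 'M[C]_n) : nat := eigcount (A *m adjmx B) (fun z => z < 0).
Definition n_zero (C : numClosedFieldType) n (A B : 'M[C]_n) : nat := eigcount (A *m adjmx B) (fun z => z == 0).

(* Main.v *)
Require Import Defs.
From HB Require Import structures.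
From mathcomp Require Import all_boot all_order all_algebra all_field.
From mathcomp Require Import zify ring.
Import Order.TTheory GRing.Theory Num.Theory Num.Def.
Local Open Scope ring_scope.
Local Open Scope sesquilinear_scope.
Set Implicit Arguments. Unset Strict Implicit. Unset Printing Implicit Defensive.

Section Adj.
Variable C : numClosedFieldType.

Lemma adjmxE m n (A : 'M[C]_(m,n)) : adjmx A = A ^t conjC.
Proof. by rewrite /adjmx map_trmx. Qed.

Lemma adjmxK m n (A : 'M[C]_(m,n)) : adjmx (adjmx A) = A.
Proof. by apply/matrixP=> i j; rewrite !mxE conjCK. Qed.

Lemma adjmxM m n p (A : 'M[C]_(m,n)) (B : 'M[C]_(n,p)) :
  adjmx (A *m B) = adjmx B *m adjmx A.
Proof. by rewrite /adjmx map_mxM trmx_mul. Qed.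

Lemma adjmxD m n (A B : 'M[C]_(m,n)) : adjmx (A + B) = adjmx A + adjmx B.
Proof. by apply/matrixP=> i j; rewrite !mxE rmorphD. Qed.

Lemma adjmxN m n (A : 'M[C]_(m,n)) : adjmx (- A) = - adjmx A.
Proof. by apply/matrixP=> i j; rewrite !mxE rmorphN. Qed.

Lemma adjmxB m n (A B : 'M[C]_(m,n)) : adjmx (A - B) = adjmx A - adjmx B.
Proof. by rewrite adjmxD adjmxN. Qed.

Lemma adjmxZ m n a (A : 'M[C]_(m,n)) : adjmx (a *: A) = a^* *: adjmx A.
Proof. by apply/matrixP=> i j; rewrite !mxE rmorphM. Qed.

Lemma adjmx1 n : adjmx (1%:M : 'M[C]_n) = 1%:M.
Proof. by apply/matrixP=> i j; rewrite !mxE rmorph_nat eq_sym. Qed.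

Lemma adjmx_diag n (d : 'rV[C]_n) : adjmx (diag_mx d) = diag_mx (map_mx conjC d).
Proof.
apply/matrixP=> i j; rewrite !mxE rmorphMn.
by have [->|ne] := eqVneq i j; rewrite ?mulr0n.
Qed.

Lemma unitary_adj n (U : 'M[C]_n) : U \is unitarymx -> U *m adjmx U = 1%:M.
Proof. by move/unitarymxP; rewrite adjmxE. Qed.

Lemma unitary_inv n (U : 'M[C]_n) : U \is unitarymx -> invmx U = adjmx U.
Proof. by move=> /invmx_unitary ->; rewrite adjmxE. Qed.

Lemma unitary_adjL n (U : 'M[C]_n) : U \is unitarymx -> adjmx U *m U = 1%:M.
Proof. by move=> hU; rewrite -unitary_inv // mulVmx // unitarymx_unit. Qed.

Lemma adjmx_inv n (M : 'M[C]_n) : M \in unitmx -> adjmx (invmx M) = invmx (adjmx M).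
Proof.
move=> uM; have uA : adjmx M \in unitmx.
  by rewrite -row_free_unit; apply/row_freeP; exists (adjmx (invmx M)); rewrite -adjmxM mulVmx // adjmx1.
by rewrite -[LHS]mul1mx -(mulVmx uA) -mulmxA -adjmxM mulVmx // adjmx1 mulmx1.
Qed.


Lemma char_poly_conj n (P D : 'M[C]_n) : P \in unitmx ->
  char_poly (invmx P *m D *m P) = char_poly D.
Proof.
move=> uP; rewrite /char_poly.
set Q := map_mx polyC P; set Qi := map_mx polyC (invmx P).
have QiQ : Qi *m Q = 1%:M by rewrite -map_mxM mulVmx // map_mx1.
have -> : char_poly_mx (invmx P *m D *m P) = Qi *m char_poly_mx D *m Q.
  rewrite /char_poly_mx !map_mxM mulmxBr mulmxBl -!/Qi -!/Q.
  by rewrite [Qi *m _%:M]scalar_mxC -[_%:M *m Qi *m Q]mulmxA QiQ mulmx1.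
by rewrite !det_mulmx mulrAC -det_mulmx QiQ det1 mul1r.
Qed.

Lemma eigseq_diag n (P : 'M[C]_n) d : P \in unitmx ->
  perm_eq (eigseq (invmx P *m diag_mx d *m P)) [seq d 0 i | i <- enum 'I_n].
Proof.
move=> uP; apply: prod_XsubC_eq; rewrite /eigseq.
case: closed_field_poly_normal => r /= Er.
rewrite (monicP (char_poly_monic _)) scale1r in Er.
rewrite -Er char_poly_conj // char_poly_trig ?diag_mx_is_trig // big_map big_enum /=.
by apply: eq_bigr => i _; rewrite mxE eqxx mulr1n.
Qed.


Definition qf n (H : 'M[C]_n) (v : 'rV[C]_n) : C := (v *m H *m adjmx v) 0 0.

Lemma adjmx_rowsub m p n (f : 'I_p -> 'I_m) (U : 'M[C]_(m, n)) :
  adjmx (rowsub f U) = colsub f (adjmx U).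
Proof. by apply/matrixP=> i j; rewrite !mxE. Qed.

Lemma qf_sub p n (U : 'M[C]_n) (f : 'I_p -> 'I_n) (d : 'rV[C]_n) (x : 'rV[C]_p) :
  U \is unitarymx -> injective f ->
  qf (adjmx U *m diag_mx d *m U) (x *m rowsub f U) =
  \sum_i d 0 (f i) * (x 0 i * (x 0 i)^*).
Proof.
move=> hU injf; rewrite /qf adjmxM adjmx_rowsub.
have -> : x *m rowsub f U *m (adjmx U *m diag_mx d *m U) *m (colsub f (adjmx U) *m adjmx x)
   = x *m (rowsub f (U *m adjmx U) *m diag_mx d *m colsub f (U *m adjmx U)) *m adjmx x.
  by rewrite -mulmx_colsub -mul_rowsub_mx !mulmxA.
rewrite unitary_adj // mul_rowsub_mx mul1mx -mxsub_mul mulmx1.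
have -> : mxsub f f (diag_mx d) = diag_mx (\row_i d 0 (f i)).
  by apply/matrixP => i j; rewrite !mxE (inj_eq injf).
rewrite mul_mx_diag !mxE; apply: eq_bigr => i _; rewrite !mxE.
by rewrite mulrAC mulrC.
Qed.

Lemma qf_conj n (G H : 'M[C]_n) v : qf (G *m H *m adjmx G) v = qf H (v *m G).
Proof. by rewrite /qf adjmxM !mulmxA. Qed.


Lemma rowsub_unitary p n (U : 'M[C]_n) (f : 'I_p -> 'I_n) :
  U \is unitarymx -> injective f -> rowsub f U \is unitarymx.
Proof.
move=> hU injf; apply/unitarymxP; rewrite -adjmxE adjmx_rowsub.
rewrite mul_rowsub_mx mulmx_colsub unitary_adj //.
by apply/matrixP => i j; rewrite !mxE (inj_eq injf).
Qed.

Lemma inertia_le n (U V G : 'M[C]_n) (d e : 'rV[C]_n) :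
  U \is unitarymx -> V \is unitarymx -> G \in unitmx ->
  (forall i, d 0 i \is Num.real) ->
  adjmx V *m diag_mx e *m V = G *m (adjmx U *m diag_mx d *m U) *m adjmx G ->
  leq #|[set i | 0 < e 0 i]| #|[set i | 0 < d 0 i]|.
Proof.
move=> hU hV uG dR EH.
set Je := [set i | 0 < e 0 i]; set Jd := [set i | 0 < d 0 i].
set Kd := ~: Jd.
have cKd : #|Kd| = (n - #|Jd|)%N by have := cardsC Jd; rewrite card_ord /Kd; lia.
rewrite leqNgt; apply/negP => lt.
pose fe : 'I_#|Je| -> 'I_n := enum_val.
pose fd : 'I_#|Kd| -> 'I_n := enum_val.
set X1 := rowsub fe V; set X2 := rowsub fd U *m invmx G.
have r1 : \rank X1 = #|Je| by apply: mxrank_unitary; apply: rowsub_unitary => //; apply: enum_val_inj.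
have r2 : \rank X2 = #|Kd|.
  rewrite mxrankMfree ?row_free_unit ?unitmx_inv //.
  by apply: mxrank_unitary; apply: rowsub_unitary => //; apply: enum_val_inj.
have rc : (0 < \rank (X1 :&: X2)%MS)%N.
  have := mxrank_sum_cap X1 X2; have := rank_leq_col (X1 + X2)%MS.
  move=> h1 h2.
  have hJd : (#|Jd| <= n)%N by rewrite -[X in (_ <= X)%N]card_ord max_card.
  lia.
have cap0 : (X1 :&: X2)%MS != 0 by rewrite -mxrank_eq0 -lt0n.
set v := nz_row (X1 :&: X2)%MS.
have v0 : v != 0 by rewrite nz_row_eq0.
have [x vx] : exists x, v = x *m X1.
  by apply/submxP; apply: submx_trans (nz_row_sub _) (capmxSl _ _).
have [y vy] : exists y, v = y *m X2.
  by apply/submxP; apply: submx_trans (nz_row_sub _) (capmxSr _ _).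
have pos : 0 < qf (adjmx V *m diag_mx e *m V) v.
  rewrite vx qf_sub //; last exact: enum_val_inj.
  have ge0 : forall i, true -> 0 <= e 0 (fe i) * (x 0 i * (x 0 i)^*).
    move=> i _; apply: mulr_ge0; last exact: mul_conjC_ge0.
    by have := enum_valP i; rewrite inE => /ltW.
  rewrite lt_def sumr_ge0 ?andbT //; apply/eqP => /(psumr_eq0P ge0) h0.
  move: v0; rewrite vx; apply/negP; rewrite negbK; apply/eqP.
  suff -> : x = 0 by rewrite mul0mx.
  apply/rowP => i; rewrite mxE; have := h0 i isT.
  have : e 0 (fe i) != 0 by have := enum_valP i; rewrite inE => /lt0r_neq0.
  by move=> ne /eqP; rewrite mulf_eq0 (negPf ne) mul_conjC_eq0 => /eqP.
have neg : qf (adjmx V *m diag_mx e *m V) v <= 0.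
  rewrite EH qf_conj vy /X2 mulmxA mulmxKV // qf_sub //; last exact: enum_val_inj.
  apply: sumr_le0 => i _; apply: mulr_le0_ge0; last exact: mul_conjC_ge0.
  have := enum_valP i; rewrite !inE => h.
  by rewrite real_leNgt ?real0 ?dR.
by move: (lt_le_trans pos neg); rewrite ltxx.
Qed.


Lemma qf_real n (H : 'M[C]_n) v : adjmx H = H -> (qf H v)^* = qf H v.
Proof.
move=> hH; rewrite /qf.
have -> : ((v *m H *m adjmx v) 0 0)^* = (adjmx (v *m H *m adjmx v)) 0 0 by rewrite !mxE.
by rewrite !adjmxM adjmxK hH mulmxA.
Qed.

Lemma self_qf m (u : 'rV[C]_m) : (u *m adjmx u) 0 0 = \sum_j u 0 j * (u 0 j)^*.
Proof. by rewrite !mxE; apply: eq_bigr => j _; rewrite !mxE. Qed.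

Lemma self_qf_eq0 m (u : 'rV[C]_m) : (u *m adjmx u) 0 0 = 0 -> u = 0.
Proof.
rewrite self_qf => h; apply/rowP => j; rewrite mxE.
have := psumr_eq0P (fun j _ => mul_conjC_ge0 (u 0 j)) h (isT : true).
by move/(_ j)/eqP; rewrite mul_conjC_eq0 => /eqP.
Qed.

Lemma conj_ik (k : C) : k \is Num.real -> ('i * k)^* = - ('i * k).
Proof. by move=> kR; rewrite rmorphM /= conjCi (conj_Creal kR) mulNr. Qed.

Lemma unit_M n (A B : 'M[C]_n) k :
  \rank (row_mx A B) = n -> adjmx (A *m adjmx B) = A *m adjmx B ->
  k \is Num.real -> 0 < k -> (A + ('i * k) *: B) \in unitmx.
Proof.
move=> rk herm kR k0; set c := 'i * k; set M := A + c *: B.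
have c0 : c != 0 by rewrite mulf_neq0 ?neq0Ci ?lt0r_neq0.
have cc : c^* = - c by apply: conj_ik.
rewrite -row_free_unit; apply/idPn => nf.
have k0' : kermx M != 0.
  rewrite -mxrank_eq0 mxrank_ker -lt0n subn_gt0.
  by move: nf; rewrite /row_free ltn_neqAle rank_leq_row andbT.
set w := nz_row (kermx M).
have w0 : w != 0 by rewrite nz_row_eq0.
have wM : w *m M = 0 by apply/sub_kermxP; apply: nz_row_sub.
have wA : w *m A = - c *: (w *m B).
  by apply/eqP; rewrite scaleNr -addr_eq0 scalemxAr -mulmxDr -/M wM.
set u := w *m B.
have q1 : qf (A *m adjmx B) w = - c * (u *m adjmx u) 0 0.
  by rewrite /qf mulmxA wA -scalemxAl -scalemxAl mxE -mulmxA -adjmxM.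
have r0 : (u *m adjmx u) 0 0 = 0.
  have hq := qf_real w herm; rewrite q1 in hq.
  have rR : ((u *m adjmx u) 0 0)^* = (u *m adjmx u) 0 0.
    by apply/conj_Creal/ger0_real; rewrite self_qf sumr_ge0 // => j _; apply: mul_conjC_ge0.
  move: hq; rewrite rmorphM rmorphN /= cc rR opprK => /eqP.
  rewrite -subr_eq0 mulNr opprK -mulr2n -mulrnAl mulf_eq0 mulrn_eq0 /= (negPf c0) /=.
  by move/eqP.
have u0 : u = 0 by apply: self_qf_eq0.
have : w *m row_mx A B == 0 by rewrite mul_mx_row wA -/u u0 scaler0 row_mx0.
rewrite mulmx_free_eq0 ?(negPf w0) //.
by rewrite /row_free rk.
Qed.


Lemma S_alg n (A1 B1 : 'M[C]_n) (c : C) : c^* = - c -> A1 + c *: B1 = 1%:M ->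
  adjmx (A1 *m adjmx B1) = A1 *m adjmx B1 ->
  let S := - (A1 - c *: B1) in
  S *m adjmx S = 1%:M /\ (c *+ 4) *: (A1 *m adjmx B1) = S - adjmx S.
Proof.
move=> cc e1 herm S.
have eA : A1 = 1%:M - c *: B1 by rewrite -e1 addrK.
have eH : A1 *m adjmx B1 = adjmx B1 - c *: (B1 *m adjmx B1).
  by rewrite eA mulmxBl mul1mx -scalemxAl.
have eHa : adjmx (A1 *m adjmx B1) = B1 + c *: (B1 *m adjmx B1).
  by rewrite eH adjmxB adjmxK adjmxZ cc scaleNr opprK adjmxM adjmxK.
have eS : S = (c *+ 2) *: B1 - 1%:M.
  rewrite /S eA; apply/matrixP => i j; rewrite !mxE; ring.
have eSa : adjmx S = - (c *+ 2) *: adjmx B1 - 1%:M.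
  by rewrite eS adjmxB adjmx1 adjmxZ rmorphMn /= cc mulNrn.
move: herm; rewrite eHa eH.
set X := B1 *m adjmx B1; set Bs := adjmx B1 => h.
have key : Bs = B1 + c *: X + c *: X by rewrite h subrK.
split.
  rewrite eSa eS mulmxBl mulmxBr !mulmxBr !mul1mx !mulmx1 -!scalemxAl -!scalemxAr -/X.
  rewrite -/Bs key; clearbody X; apply/matrixP => i j; rewrite !mxE; ring.
rewrite eSa eS -/X -/Bs key; clearbody X; apply/matrixP => i j; rewrite !mxE; ring.
Qed.


Lemma count_set n (d : 'rV[C]_n) (P : pred C) :
  count P [seq d 0 i | i <- enum 'I_n] = #|[set i | P (d 0 i)]|.
Proof.
rewrite count_map enumT cardsE cardE /enum_mem size_filter.
by apply: eq_count => i; rewrite inE.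
Qed.

Lemma eigcount_diag n (W : 'M[C]_n) s (P : pred C) : W \in unitmx ->
  eigcount (invmx W *m diag_mx s *m W) P = #|[set i | P (s 0 i)]|.
Proof. by move=> uW; rewrite /eigcount (permP (eigseq_diag s uW)) count_set. Qed.

Lemma card_zero n (d : 'rV[C]_n) : (forall i, d 0 i \is Num.real) ->
  #|[set i | d 0 i == 0]| = subn (subn n #|[set i | 0 < d 0 i]|) #|[set i | d 0 i < 0]|.
Proof.
move=> dR.
have hU : [set i | 0 < d 0 i] :|: [set i | d 0 i < 0] = ~: [set i | d 0 i == 0].
  apply/setP => i; rewrite !inE (real_neqr_lt (dR i) (real0 _)) orbC //.
have hI : [set i | 0 < d 0 i] :&: [set i | d 0 i < 0] = set0.
  apply/setP => i; rewrite !inE; apply/negP => /andP [h1 h2].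
  by move: (lt_trans h1 h2); rewrite ltxx.
have := cardsUI [set i | 0 < d 0 i] [set i | d 0 i < 0].
rewrite hU hI cards0 addn0 => h.
have := cardsC [set i | d 0 i == 0]; rewrite card_ord; lia.
Qed.

Lemma diag_mxN n (d : 'rV[C]_n) : diag_mx (- d) = - diag_mx d.
Proof. by apply/matrixP => i j; rewrite !mxE mulNrn. Qed.

Lemma inertia n (U V G : 'M[C]_n) (d e : 'rV[C]_n) :
  U \is unitarymx -> V \is unitarymx -> G \in unitmx ->
  (forall i, d 0 i \is Num.real) -> (forall i, e 0 i \is Num.real) ->
  adjmx V *m diag_mx e *m V = G *m (adjmx U *m diag_mx d *m U) *m adjmx G ->
  [/\ #|[set i | 0 < e 0 i]| = #|[set i | 0 < d 0 i]|,
      #|[set i | e 0 i < 0]| = #|[set i | d 0 i < 0]| &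
      #|[set i | e 0 i == 0]| = #|[set i | d 0 i == 0]|].
Proof.
move=> hU hV uG dR eR EH.
have EH' : adjmx U *m diag_mx d *m U = invmx G *m (adjmx V *m diag_mx e *m V) *m adjmx (invmx G).
  have uaG : adjmx G \in unitmx.
    by rewrite -row_free_unit; apply/row_freeP; exists (adjmx (invmx G)); rewrite -adjmxM mulVmx // adjmx1.
  by rewrite EH adjmx_inv // !mulmxA mulVmx // mul1mx mulmxK.
have uGi : invmx G \in unitmx by rewrite unitmx_inv.
have NEH : adjmx V *m diag_mx (- e) *m V = G *m (adjmx U *m diag_mx (- d) *m U) *m adjmx G.
  by rewrite !diag_mxN !(mulmxN, mulNmx) EH ?(mulmxN, mulNmx).
have NEH' : adjmx U *m diag_mx (- d) *m U = invmx G *m (adjmx V *m diag_mx (- e) *m V) *m adjmx (invmx G).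
  by rewrite !diag_mxN !(mulmxN, mulNmx) EH' ?(mulmxN, mulNmx).
have ndR : forall i, (- d) 0 i \is Num.real by move=> i; rewrite mxE realN.
have neR : forall i, (- e) 0 i \is Num.real by move=> i; rewrite mxE realN.
have p1 := inertia_le hU hV uG dR EH.
have p2 := inertia_le hV hU uGi eR EH'.
have n1 := inertia_le hU hV uG ndR NEH.
have n2 := inertia_le hV hU uGi neR NEH'.
have eN : forall f : 'rV[C]_n, [set i | 0 < (- f) 0 i] = [set i | f 0 i < 0].
  by move=> f; apply/setP => i; rewrite !inE mxE oppr_gt0.
rewrite !eN in n1 n2.
have pe : #|[set i | 0 < e 0 i]| = #|[set i | 0 < d 0 i]| by apply/eqP; rewrite eqn_leq p1 p2.
have ne : #|[set i | e 0 i < 0]| = #|[set i | d 0 i < 0]| by apply/eqP; rewrite eqn_leq n1 n2.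
by split => //; rewrite card_zero // card_zero // pe ne.
Qed.

End Adj.

Unset Implicit Arguments.
Theorem proposition3p4 (C : numClosedFieldType) (n : nat) (A B : 'M[C]_n) (k : C) :
  max_isotropic_data A B -> k \is Num.real -> 0 < k ->
  [/\ eigcount (Smat A B k) (fun z => 0 < 'Im z) = n_plus A B,
      eigcount (Smat A B k) (fun z => 'Im z < 0) = n_minus A B &
      eigcount (Smat A B k) (fun z => z \is Num.real) = n_zero A B].
Proof.
move=> [rk herm] kR k0.
have uM := unit_M rk herm kR k0.
set c := 'i * k in uM *.
have cc : c^* = - c by apply: conj_ik.
set M := A + c *: B in uM.
set G := invmx M.
set A1 := G *m A; set B1 := G *m B.
have e1 : A1 + c *: B1 = 1%:M by rewrite /A1 /B1 scalemxAr -mulmxDr /G mulVmx.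
have eH1 : A1 *m adjmx B1 = G *m (A *m adjmx B) *m adjmx G by rewrite /A1 /B1 adjmxM !mulmxA.
have hH1 : adjmx (A1 *m adjmx B1) = A1 *m adjmx B1.
  by rewrite eH1 adjmxM adjmxK [adjmx (G *m _)]adjmxM herm mulmxA.
have [SS HS] := S_alg cc e1 hH1.
have eS : Smat A B k = - (A1 - c *: B1).
  by rewrite /Smat -/c -/M -/G /A1 /B1 mulmxBr scalemxAr.
rewrite eS in SS HS *.
set S := - (A1 - c *: B1) in SS HS *.
have nS : S \is normalmx.
  by apply/normalmxP; rewrite -adjmxE SS (mulmx1C SS).
have ES : S = invmx (spectralmx S) *m diag_mx (spectral_diag S) *m spectralmx S.
  exact/orthomx_spectralP.
have hW := spectral_unitarymx S.
set W := spectralmx S in ES hW; set s := spectral_diag S in ES.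
set H := A *m adjmx B in herm eH1 *.
have hermH : H \is hermsymmx.
  by apply/is_hermitianmxP; rewrite expr0 scale1r -adjmxE herm.
have nH : H \is normalmx by apply: hermitian_normalmx.
have EHd : H = invmx (spectralmx H) *m diag_mx (spectral_diag H) *m spectralmx H.
  exact/orthomx_spectralP.
have hP := spectral_unitarymx H.
have dR : forall i, spectral_diag H 0 i \is Num.real.
  by move=> i; apply: (mxOverP (hermitian_spectral_diag_real hermH)).
set P := spectralmx H in EHd hP; set dH := spectral_diag H in EHd dR.
pose h : 'rV[C]_n := \row_i ('Im (s 0 i) / (k *+ 2)).
have k2 : 0 < k *+ 2 by rewrite pmulrn_lgt0.
have k2i : 0 < (k *+ 2)^-1 by rewrite invr_gt0.
have hR : forall i, h 0 i \is Num.real.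
  by move=> i; rewrite mxE rpredM ?Creal_Im // ?rpredV ?gtr0_real.
have c4 : c *+ 4 != 0.
  by rewrite mulrn_eq0 /= mulf_neq0 ?neq0Ci ?lt0r_neq0.
have EH1 : adjmx W *m diag_mx h *m W = G *m (adjmx P *m diag_mx dH *m P) *m adjmx G.
  rewrite -(unitary_inv hP) -EHd -eH1.
  apply: (scalerI c4); rewrite HS.
  rewrite scalemxAl scalemxAr.
  have -> : (c *+ 4) *: diag_mx h = diag_mx s - diag_mx (map_mx conjC s).
    apply/matrixP => i j; rewrite !mxE.
    case: (i == j); last by rewrite !mulr0n subr0 mulr0.
    rewrite !mulr1n ImE.
    have i2 : 'i * 'i = -1 :> C by rewrite -expr2 sqrCi.
    have kn : k != 0 by rewrite lt0r_neq0.
    have -> : c *+ 4 * ('i * ((s 0 i)^* - s 0 i) / 2%:R / (k *+ 2)) = ('i * 'i) * ((s 0 i)^* - s 0 i).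
      rewrite /c; field; rewrite ?mulrn_eq0 ?kn //= ?pnatr_eq0 //.
    by rewrite i2 mulN1r opprB.
  rewrite ES adjmxM adjmxM adjmx_diag unitary_inv // adjmxK.
  by rewrite mulmxBr mulmxBl mulmxA.
have uG : G \in unitmx by rewrite /G unitmx_inv.
have [pe ne ze] := inertia hP hW uG dR hR EH1.
rewrite /n_plus /n_minus /n_zero -/H EHd ES.
rewrite !eigcount_diag ?(unitarymx_unit hP) ?(unitarymx_unit hW) //.
split.
- by rewrite -pe; apply: eq_card => i; rewrite !inE mxE pmulr_lgt0.
- by rewrite -ne; apply: eq_card => i; rewrite !inE mxE pmulr_llt0.
- rewrite -ze; apply: eq_card => i; rewrite !inE mxE.
  rewrite mulf_eq0 invr_eq0 (negPf (lt0r_neq0 k2)) orbF.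
  by apply/Creal_ImP/eqP.
Qed.
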